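(* Finite memory winning strategies are not sufficient in interval mean-payoff games: there exists an interval mean-payoff game $(G,I)$ in which Eve has a winning strategy but has no winning strategy with finite memory.
   Context: A game graph is a tuple $G=(V,V_\exists,E,w,q_0)$ where $(V,E)$ is a finite directed graph in which every vertex has an outgoing edge, $w:E\to\mathbb{Z}$ is an integer edge-weight function, $V_\exists\subseteq V$ are Eve's vertices (the rest are Adam's), and $q_0\in V$ is the initial vertex. A play is an infinite path $\pi=v_0v_1\cdots$ with $v_0=q_0$; write $w(\pi[..k])=\sum_{i=0}^{k-1}w(v_i,v_{i+1})$. A strategy for a player maps finite play prefixes ending in one of that player's vertices to a successor vertex; it has finite memory if it can be realized as the output of a finite-state machine (with finitely many memory states) reading the play. The (liminf) mean-payoff of a play is $\underline{MP}(\pi)=\liminf_{k\to\infty}\frac1k w(\pi[..k])$. An interval mean-payoff game is a pair $(G,I)$ with $I$ a finite union of real intervals; a play is winning for Eve iff $\underline{MP}(\pi)\in I$, and winning for Adam otherwise. A strategy is winning for a player if all plays consistent with it are winning for that player. *)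

(* Defs.v *)
From HB Require Import structures.
From mathcomp Require Import all_boot all_order all_algebra.
From mathcomp Require Import all_classical all_reals all_analysis.
Import Order.TTheory GRing.Theory Num.Theory.
Local Open Scope ring_scope.

(* A game graph (V, V_Eve, E, w, q0): V finite, every vertex has an outgoing
   edge, integer weights (only their values on edges matter). *)
Record game := Game {
  gV : finType;
  gE : rel gV;
  gEve : pred gV;          (* Eve's vertices; the others are Adam's *)
  gw : gV -> gV -> int;
  gq0 : gV;
  g_total : forall v, exists v', gE v v'
}.

Set Implicit Arguments. Unset Strict Implicit. Unset Printing Implicit Defensive.

Section Games.
Variable G : game.
Local Notation V := (gV G).

Definition is_play (p : nat -> V) : Prop :=
  p 0%N = gq0 G /\ forall i, gE G (p i) (p i.+1).

Definition pref (p : nat -> V) (k : nat) : seq V := mkseq p k.+1.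

Definition is_prefix (s : seq V) : Prop :=
  exists p k, is_play p /\ s = pref p k.

Definition strategy := seq V -> V.

Definition valid_strategy (sigma : strategy) : Prop :=
  forall s, is_prefix s -> gEve G (last (gq0 G) s) ->
    gE G (last (gq0 G) s) (sigma s).

Definition consistent (sigma : strategy) (p : nat -> V) : Prop :=
  forall k, gEve G (p k) -> p k.+1 = sigma (pref p k).

Definition finite_memory (sigma : strategy) : Prop :=
  exists (M : finType) (m0 : M) (upd : M -> V -> M) (out : M -> V),
    forall s, is_prefix s -> gEve G (last (gq0 G) s) ->
      sigma s = out (foldl upd m0 s).

Definition wprefix (p : nat -> V) (k : nat) : int :=
  \sum_(i < k) gw G (p i) (p i.+1).

Definition MP (R : realType) (p : nat -> V) : \bar R :=
  limn_einf (fun k : nat => (((wprefix p k)%:~R / k%:R : R))%:E).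

Definition in_union (R : realType) (I : seq (interval R)) (x : R) : bool :=
  has (fun i => x \in i) I.

Definition eve_wins_play (R : realType) (I : seq (interval R)) (p : nat -> V) : Prop :=
  exists x : R, MP R p = x%:E /\ in_union I x.

Definition winning_strategy (R : realType) (I : seq (interval R)) (sigma : strategy) : Prop :=
  valid_strategy sigma /\
  forall p, is_play p -> consistent sigma p -> eve_wins_play I p.

End Games.

(* Main.v *)
Require Import Defs.
From mathcomp Require Import all_boot all_order all_algebra.
From mathcomp Require Import all_classical all_reals all_analysis.
From mathcomp Require Import ring lra.
Import Order.TTheory GRing.Theory Num.Theory.
Import numFieldNormedType.Exports.
Local Open Scope classical_set_scope.
Local Open Scope ring_scope.

Lemma avg_cvg (R : realType) (S : nat -> int) (y B : R) :
  (forall k, `|(S k)%:~R - y * k%:R| <= B) ->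
  (fun k : nat => ((S k)%:~R / k%:R : R)) @ \oo --> y.
Proof.
move=> hB; apply/cvgrPdist_le => eps eps0.
have B0 : 0 <= B by apply: le_trans (hB 0%N); exact: normr_ge0.
exists (Num.truncn (B / eps)).+1 => // k /= hk.
have k0 : (0 < k)%N by apply: leq_trans hk.
have k0' : (0 : R) < k%:R by rewrite ltr0n.
have -> : y - (S k)%:~R / k%:R = - ((S k)%:~R - y * k%:R) / k%:R.
  by field; rewrite lt0r_neq0.
rewrite normrM normrN normfV (gtr0_norm k0') ler_pdivrMr //.
apply: le_trans (hB k) _.
rewrite -ler_pdivrMl // mulrC.
apply: ltW; apply: lt_le_trans (truncnS_gt _) _.
by rewrite ler_nat.
Qed.

Lemma mp_of_bound (R : realType) (G : game) (p : nat -> gV G) (y B : R) :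
  (forall k, `|(wprefix p k)%:~R - y * k%:R| <= B) -> MP R p = y%:E.
Proof.
move=> hB; rewrite /MP.
have h := @avg_cvg R _ _ _ hB.
have h2 : (fun k : nat => (((wprefix p k)%:~R / k%:R : R))%:E) @ \oo --> y%:E.
  by apply: cvg_EFin; [exact: nearW | exact: h].
by have [-> _] := cvg_limn_einf_sup h2.
Qed.
Lemma tot (v : bool) : exists v' : bool, (fun _ _ => true) v v'.
Proof. by exists v. Qed.

Definition W (v : bool) : int := if v then 2 else 0.

Definition gm : game := @Game bool (fun _ _ => true) predT (fun _ v => W v) false tot.

Lemma wprefixS (p : nat -> bool) k :
  @wprefix gm p k.+1 = @wprefix gm p k + W (p k.+1).
Proof. by rewrite /wprefix big_ord_recr. Qed.

Lemma wprefix0 (p : nat -> bool) : @wprefix gm p 0 = 0.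
Proof. by rewrite /wprefix big_ord0. Qed.

Lemma sum_pref (p : nat -> bool) k :
  \sum_(v <- behead (@pref gm p k)) W v = @wprefix gm p k.
Proof.
elim: k => [|k IH]; first by rewrite wprefix0 /pref /= big_nil.
rewrite wprefixS -IH /pref mkseqS.
by rewrite /mkseq /= -cats1 big_cat /= big_cons big_nil addr0.
Qed.

From mathcomp Require Import zify.
Lemma no_rat (R : realType) (c d : nat) : (0 < d)%N ->
  Num.sqrt (2 : R) * d%:R <> c%:R.
Proof.
move=> d0 h.
have h2 : ((2 * d ^ 2)%N%:R : R) = (c ^ 2)%N%:R.
  rewrite natrM !natrX -h exprMn sqr_sqrtr //.
have /eqP : (2 * d ^ 2)%N = (c ^ 2)%N by apply/eqP; rewrite -(eqr_nat R) h2.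
move=> /eqP e.
have c0 : (0 < c ^ 2)%N by rewrite -e muln_gt0 expn_gt0 d0.
have c0' : (0 < c)%N by rewrite expn_gt0 /= in c0; case: c c0 {h h2 e} => [|c]; rewrite ?expn0 //.
have := congr1 (logn 2) e.
rewrite lognM // ?expn_gt0 ?d0 // !lognX logn_prime //.
lia.
Qed.

Section Main.
Variable R : realType.
Let x : R := Num.sqrt 2.
Lemma x0 : 0 < x. Proof. by rewrite sqrtr_gt0. Qed.
Lemma x2 : x <= 2.
Proof. have h : x ^+ 2 = 2 by rewrite sqr_sqrtr. have := x0. nra. Qed.

Definition sigA : strategy gm := fun s =>
  ((\sum_(v <- behead s) W v)%:~R <= x * (size s).-1%:R).

Lemma partA_bound (p : nat -> bool) : consistent sigA p ->
  forall k, `|(@wprefix gm p k)%:~R - x * k%:R| <= 2.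
Proof.
move=> hc; elim => [|k IH]; first by rewrite wprefix0 mulr0 subr0 normr0.
rewrite wprefixS.
have -> : p k.+1 = sigA (@pref gm p k) by apply: hc.
rewrite /sigA sum_pref size_mkseq /=.
have := x0; have := x2.
move: IH; set S : R := (@wprefix gm p k)%:~R => IH.
rewrite intrD -[k.+1]addn1 natrD mulrDr mulr1.
rewrite -/S /W; case: ifP => hS h2 h0; rewrite ler_norml;
  move: IH; rewrite ler_norml => /andP [a b]; apply/andP; split; lra.
Qed.
End Main.

Lemma any_prefix s : (size s > 0)%N -> head false s = false -> @is_prefix gm s.
Proof.
move=> hs h0.
exists (fun i => nth false s i), (size s).-1; split; first by split => //; case: s hs h0.
rewrite /pref prednK //; apply: (@eq_from_nth _ false); rewrite ?size_mkseq //.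
by move=> i hi; rewrite nth_mkseq.
Qed.

Lemma periodic_bound (p : nat -> bool) (i d : nat) : (0 < d)%N ->
  (forall k, (i <= k)%N -> p (k + d).+1 = p k.+1) ->
  exists (C : int) (B : nat), forall k,
    `|(d%:Z * @wprefix gm p k - C * k%:Z)| <= B%:Z.
Proof.
move=> d0 hp.
set S := @wprefix gm p.
set C := S (i + d)%N - S i.
have hS : forall t, S (i + t + d)%N = S (i + t)%N + C.
  elim => [|t IH]; first by rewrite addn0 /C addrC subrK.
  rewrite addnS /S addSn !wprefixS -/S IH.
  rewrite hp ?leq_addr //; ring.
set D := fun k => d%:Z * S k - C * k%:Z.
have hD : forall k, (i <= k)%N -> D (k + d)%N = D k.
  move=> k /subnK <-; rewrite [(_ - i + i)%N]addnC /D hS !PoszD; ring.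
exists C; exists (\max_(l < i + d) absz (D l)) => k.
rewrite -/(D k).
elim/ltn_ind: k => k IH.
case: (ltnP k (i + d)) => hk.
  rewrite -abszE lez_nat.
  exact: (leq_bigmax (Ordinal hk)).
have hk' : k = ((k - d) + d)%N by lia.
rewrite hk' hD; last by lia.
apply: IH; lia.
Qed.

Lemma bound_real (R : realType) (p : nat -> bool) (d : nat) (C : int) (B : nat) :
  (0 < d)%N -> (forall k, `|(d%:Z * @wprefix gm p k - C * k%:Z)| <= B%:Z) ->
  forall k, `|(@wprefix gm p k)%:~R - (C%:~R / d%:R : R) * k%:R| <= B%:R / d%:R.
Proof.
move=> d0 hb k.
have d0' : (0 : R) < d%:R by rewrite ltr0n.
have := hb k; rewrite -(ler_int R) intr_norm rmorphB !rmorphM /= => h.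
have -> : (@wprefix gm p k)%:~R - (C%:~R / d%:R : R) * k%:R =
  ((d%:Z)%:~R * (@wprefix gm p k)%:~R - C%:~R * (k%:Z)%:~R) / d%:R.
  by rewrite -!pmulrn; field; rewrite lt0r_neq0.
rewrite normrM (@gtr0_norm _ (d%:R^-1)) ?invr_gt0 // ler_pM2r ?invr_gt0 // -!pmulrn.
Qed.

Theorem mainTheorem3 (R : realType) :
  exists (G : game) (I : seq (interval R)),
    (exists sigma : strategy G, winning_strategy I sigma) /\
    ~ (exists sigma : strategy G, finite_memory sigma /\ winning_strategy I sigma).
Proof.
pose x : R := Num.sqrt 2.
have hx0 : 0 < x by rewrite sqrtr_gt0.
exists gm, [:: `[x, x]]; split.
  exists (sigA R); split; first by [].
  move=> p _ hc; exists x; split; last by rewrite /in_union /= in_itv /= lexx.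
  apply: (@mp_of_bound R gm p x 2); exact: partA_bound.
move=> [sigma [[M [m0 [upd [out hfm]]]] [_ hwin]]].
pose F := fun m => upd m (out m).
pose mm k := iter k F (upd m0 false).
pose p : nat -> bool := fun k => if k is k'.+1 then out (mm k') else false.
have hfold : forall k, foldl upd m0 (@pref gm p k) = mm k.
  elim => [|k IH]; first by [].
  by rewrite /pref mkseqS foldl_rcons -/(@pref gm p k) IH.
have hplay : @is_play gm p by split.
have hcons : consistent sigma p.
  move=> k _; rewrite hfm //; last by exists p, k.
  by rewrite hfold.
have [x' [hmp hin]] := hwin p hplay hcons.
have ex' : x' = x.
  by move: hin; rewrite /in_union /= in_itv /= orbF => /andP [a b]; apply/le_anti/andP.
subst x'.
pose f : 'I_#|M|.+1 -> M := fun o => mm o.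
have /injectivePn [a [b nab eab]] : ~~ injectiveb f.
  apply/negP => /injectiveP /leq_card; rewrite card_ord; lia.
have [i [j [ij eij]]] : exists i j, (i < j)%N /\ mm i = mm j.
  case: (ltngtP a b) => hab.
  - by exists a, b.
  - by exists b, a.
  - by move: nab; rewrite (val_inj hab) eqxx.
pose d := (j - i)%N.
have d0 : (0 < d)%N by rewrite subn_gt0.
have hmm : forall k, (i <= k)%N -> mm (k + d)%N = mm k.
  move=> k hk.
  have -> : (k + d = (k - i) + j)%N by rewrite /d; lia.
  rewrite /mm iterD -/(mm j) -eij /mm -iterD subnK //.
have hp : forall k, (i <= k)%N -> p (k + d).+1 = p k.+1.
  by move=> k hk /=; rewrite hmm.
have [C [B hb]] := @periodic_bound p i d d0 hp.
have := @mp_of_bound R gm p _ _ (@bound_real R p d C B d0 hb).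
rewrite hmp => -[] e.
have hC : x * d%:R = C%:~R by rewrite e divfK // pnatr_eq0 -lt0n.
have C0 : (0 : R) < C%:~R by rewrite -hC mulr_gt0 // ltr0n.
case: C {hb e} hC C0 => [c|c] hC C0; last by move: C0; rewrite ltr0z.
by apply: (@no_rat R c d d0); rewrite hC.
Qed.
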